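(* Let $G$ be a locally compact group with compact topological commutator subgroup $C=\overline{[G,G]}$, with $G/C$, $K$, $R$, $U$, $H$, $D$ as described below. Then the approximate block diagonals $\bigcup_{hk^{-1}\in lU}(hU\times kU)$ ($l\in H$, union over $h,k\in H$) are exactly the block diagonals $\bigcup_{\dot h\dot k^{-1}=\dot l}(\dot hU\times\dot kU)$ ($\dot l\in D$).
   Context: Let $p_C:G\to G/C$ be the quotient map. $G/C$ is locally compact abelian, identified with $\mathbb{R}^d\times J$ where $d\ge0$ and $J$ has a compact open subgroup $K$. Let $R\subset J$ be a complete set of representatives of $J/K$, $U=p_C^{-1}([-\tfrac12,\tfrac12)^d\times K)$, and $H\subset G$ a complete set of representatives (under $p_C$) of $\mathbb{Z}^d\times R\subset G/C$. Let $D=\mathbb{Z}^d\times J/K$ and for $g\in G$ let $\dot g=(\mathrm{id}\times p_K)(p_C(g))\in\mathbb{R}^d\times J/K$, where $p_K:J\to J/K$; $h\mapsto\dot h$ is a bijection $H\to D$ and $\dot hU$ denotes $hU$. *)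

(* Defs.v *)
From HB Require Import structures.
From mathcomp Require Import all_boot all_order all_algebra.
From mathcomp Require Import all_classical all_reals all_analysis.
Set Implicit Arguments. Unset Strict Implicit. Unset Printing Implicit Defensive.
Import Order.TTheory GRing.Theory Num.Theory.
Import numFieldNormedType.Exports.
Local Open Scope classical_set_scope.
Local Open Scope ring_scope.

Record is_topgroup (G : topologicalType) (mul : G -> G -> G) (inv : G -> G)
    (e : G) : Prop := {
  tg_assoc : forall x y z, mul x (mul y z) = mul (mul x y) z;
  tg_mul1g : forall x, mul e x = x;
  tg_mulg1 : forall x, mul x e = x;
  tg_mulVg : forall x, mul (inv x) x = e;
  tg_mulgV : forall x, mul x (inv x) = e;
  tg_mul_cont : continuous (fun xy : G * G => mul xy.1 xy.2);
  tg_inv_cont : continuous inv }.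

Definition is_lc_group (G : topologicalType) (mul : G -> G -> G) (inv : G -> G)
    (e : G) : Prop :=
  [/\ is_topgroup mul inv e, hausdorff_space G & locally_compact [set: G]].

Definition is_subgroup (G : Type) (mul : G -> G -> G) (inv : G -> G) (e : G)
    (S : set G) : Prop :=
  S e /\ forall x y, S x -> S y -> S (mul x (inv y)).

Definition commg (G : Type) (mul : G -> G -> G) (inv : G -> G) (x y : G) : G :=
  mul (mul (inv x) (inv y)) (mul x y).

Definition commutator_subgroup (G : Type) (mul : G -> G -> G) (inv : G -> G)
    (e : G) : set G :=
  [set x | forall S : set G, is_subgroup mul inv e S ->
     (forall a b, S (commg mul inv a b)) -> S x].

Definition top_commutator_subgroup (G : topologicalType) (mul : G -> G -> G)
    (inv : G -> G) (e : G) : set G :=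
  closure (commutator_subgroup mul inv e).

Definition is_addsubgroup (J : zmodType) (S : set J) : Prop :=
  S 0 /\ forall x y, S x -> S y -> S (x - y).

Definition ltrans (G : Type) (mul : G -> G -> G) (x : G) (A : set G) : set G :=
  [set mul x a | a in A].

Definition Zpts (R : realType) (d : nat) : set 'rV[R]_d :=
  [set v | forall i, v ord0 i \is a Num.int].

Definition half_cube (R : realType) (d : nat) : set 'rV[R]_d :=
  [set v | forall i, - (2%:R)^-1 <= v ord0 i /\ v ord0 i < (2%:R)^-1].

(* coset j + K in J, i.e. the element p_K(j) of J/K *)
Definition coset (J : zmodType) (K : set J) (j : J) : set J :=
  [set j + k | k in K].

(* dot g = (id x p_K)(p_C g), an element of R^d x J/K (cosets as sets) *)
Definition dotm (R : realType) (d : nat) (J : zmodType) (G : Type)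
    (p : G -> 'rV[R]_d * J) (K : set J) (g : G) : 'rV[R]_d * set J :=
  ((p g).1, coset K (p g).2).

(* group "difference" x y^{-1} in R^d x J/K: the coset difference is the
   setwise difference A - B = {a - b | a in A, b in B} *)
Definition dot_sub (R : realType) (d : nat) (J : zmodType)
    (x y : 'rV[R]_d * set J) : 'rV[R]_d * set J :=
  (x.1 - y.1, [set a - b | a in x.2 & b in y.2]).

(* Main.v *)
Require Import Defs.
From HB Require Import structures.
From mathcomp Require Import all_boot all_order all_algebra.
From mathcomp Require Import all_classical all_reals all_analysis.
Import Order.TTheory GRing.Theory Num.Theory.
Import numFieldNormedType.Exports.
Local Open Scope classical_set_scope.
Local Open Scope ring_scope.
From mathcomp Require Import zify lra.
Lemma int_half0 (R:realType) (x:R): x \is a Num.int -> -(2%:R)^-1 <= x -> x < (2%:R)^-1 -> x = 0.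
Proof.
move=>/intrP[m ->] h1 h2.
have a : m%:~R < (1%:~R : R) by rewrite (_ : 1%:~R = 1 :> R) //; lra.
have b : ((-1)%:~R : R) < m%:~R by rewrite (_ : (-1)%:~R = -1 :> R) //; lra.
rewrite ltr_int in a; rewrite ltr_int in b.
have -> : m = 0 by lia.
by [].
Qed.

Lemma z1 (V:zmodType) (a b c d : V) : a - b - (a + c - (b + d)) = d - c.
Proof. rewrite !opprD !opprK -!addrA addrCA addNKr addrCA addKr addrC. done. Qed.
Lemma z2 (V:zmodType) (a b c ka kb : V) : (a + ka) - (b + kb) = c + (a - b - c + (ka - kb)).
Proof. rewrite [c + _]addrC -!addrA; congr (_ + _). rewrite opprD.
rewrite (addrCA (-c)) (addrCA (-c)) addNr addr0 [RHS]addrCA. done. Qed.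
Lemma z3 (V:zmodType) (a b c x : V) : a + (x - (a - b - c)) - (b + 0) = c + x.
Proof. rewrite addr0 !opprD !opprK -!addrA addrCA addNKr (addrCA b) addrN addr0 addrC. done. Qed.

Theorem mainTheorem7
  (G : topologicalType) (mul : G -> G -> G) (inv : G -> G) (e : G)
  (R : realType) (d : nat) (J : topologicalZmodType)
  (pC : G -> 'rV[R]_d * J) (K : set J) (Rs : set J) (H : set G) :
  (* G is a locally compact group *)
  is_lc_group mul inv e ->
  (* C = closure of [G,G] is compact *)
  compact (top_commutator_subgroup mul inv e) ->
  (* pC : G -> R^d x J is the quotient map G -> G/C composed with a
     topological group isomorphism G/C ~ R^d x J : a continuous, open,
     surjective homomorphism with kernel C *)
  (forall x y, pC (mul x y) = pC x + pC y) ->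
  (forall y, exists x, pC x = y) ->
  [set x | pC x = 0] = top_commutator_subgroup mul inv e ->
  continuous pC ->
  (forall A : set G, open A -> open (pC @` A)) ->
  (* K is a compact open subgroup of J *)
  is_addsubgroup K -> compact K -> open K ->
  (* Rs is a complete set of representatives of J/K *)
  (forall j, exists! r, Rs r /\ K (j - r)) ->
  (* H is a complete set of representatives (under pC) of Z^d x Rs *)
  (forall h, H h -> Zpts (pC h).1 /\ Rs (pC h).2) ->
  (forall y, Zpts y.1 -> Rs y.2 -> exists! h, H h /\ pC h = y) ->
  let U := pC @^-1` [set y | half_cube y.1 /\ K y.2] in
  let dot := dotm pC K in
  forall l, H l ->
    [set z : G * G | exists h k, [/\ H h, H k,
        ltrans mul l U (mul h (inv k)),
        ltrans mul h U z.1 & ltrans mul k U z.2]]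
    =
    [set z : G * G | exists h k, [/\ H h, H k,
        dot_sub (dot h) (dot k) = dot l,
        ltrans mul h U z.1 & ltrans mul k U z.2]].
Proof.
move=> hlc _ hmul _ _ _ _ [K0 KB] _ _ _ hH1 _ U dot l Hl.
case: hlc => [[assoc mul1g mulg1 mulVg mulgV _ _] _ _].
have pe : pC e = 0.
  have : pC e + 0 = pC e + pC e by rewrite addr0 -hmul mul1g.
  by move/addrI.
have pinv : forall k, pC (inv k) = - pC k.
  move=> k; apply: (addrI (pC k)); by rewrite -hmul mulgV pe subrr.
have KN : forall x, K x -> K (- x) by move=> x Kx; rewrite -sub0r; exact: KB.
have KD : forall x y, K x -> K y -> K (x + y).
  by move=> x y Kx Ky; rewrite -(opprK y); apply: KB => //; exact: KN.
have key1 : forall h k, H h -> H k ->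
   ltrans mul l U (mul h (inv k)) <->
   ((pC h - pC k - pC l).1 = 0 /\ K (pC h - pC k - pC l).2).
  move=> h k Hh Hk; split.
  - case=> u [Uu1 Uu2] eq.
    have pu : pC u = pC h - pC k - pC l.
      by rewrite -[pC u](addKr (pC l)) -hmul eq hmul pinv addrC.
    rewrite -pu; split => //.
    apply/rowP => i; rewrite mxE.
    case: (Uu1 i) => a b; apply: int_half0 a b.
    rewrite pu /=.
    case: (hH1 _ Hh) => Zh _; case: (hH1 _ Hk) => Zk _; case: (hH1 _ Hl) => Zl _.
    by rewrite !mxE; apply: rpredB; [apply: rpredB|].
  - move=> [w1 w2].
    exists (mul (inv l) (mul h (inv k))).
      rewrite /U /= !hmul !pinv.
      have -> : - pC l + (pC h + - pC k) = pC h - pC k - pC l by rewrite addrC.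
      split => // i; rewrite w1 mxE; split; lra.
    by rewrite assoc mulgV mul1g.
have key2 : forall h k, H h -> H k ->
   dot_sub (dot h) (dot k) = dot l <->
   ((pC h - pC k - pC l).1 = 0 /\ K (pC h - pC k - pC l).2).
  move=> h k Hh Hk; rewrite /dot_sub /dot /dotm /=; split.
  - move=> [e1 e2]; split; first by rewrite e1 subrr.
    have : coset K (pC l).2 ((pC l).2 + 0) by exists 0.
    rewrite -e2 => -[a [ka Ka <-] [kb [kb' Kb' <-]] eq].
    have -> : (pC h).2 - (pC k).2 - (pC l).2 = kb' - ka.
      by rewrite -(addr0 (pC l).2) -eq z1.
    exact: KB.
  - move=> [w1 w2]; congr (_, _); first by rewrite -[RHS]add0r -w1 /= subrK.
    apply/seteqP; split => x /=.
    + move=> [a [ka Ka <-] [b [kb Kb <-]] <-].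
      exists ((pC h).2 - (pC k).2 - (pC l).2 + (ka - kb)); first by apply: KD => //; apply: KB.
      by rewrite (@z2 J (pC h).2 (pC k).2 (pC l).2 ka kb).
    + move=> [c Kc <-].
      exists ((pC h).2 + (c - ((pC h).2 - (pC k).2 - (pC l).2))).
        by exists (c - ((pC h).2 - (pC k).2 - (pC l).2)) => //; apply: KB.
      exists ((pC k).2 + 0); first by exists 0.
      exact: z3.
apply/seteqP; split => z /= [h [k [Hh Hk c1 c2 c3]]]; exists h, k; split => //.
  by apply/(key2 _ _ Hh Hk)/(key1 _ _ Hh Hk).
by apply/(key1 _ _ Hh Hk)/(key2 _ _ Hh Hk).
Qed.
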